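(* Consider the multi-market oligopoly of equal capacity $\mathcal{G}$ described in the context, and suppose: each $u_x$ ($x\in E$) is concave and differentiable; $c$ is convex and differentiable; and at least one of the following holds: (a) all but at most one of the $u_x$ are strictly concave, or (b) $c$ is strictly convex. Then every pure-strategy Nash equilibrium $\mathbf{S}^*=(\mathbf{s}_i^* )_{i=1}^n$ of $\mathcal{G}$ is symmetric, i.e. $\mathbf{s}_i^*=\mathbf{s}_j^*$ for all $i,j\in N$.
   Context: Let $N=\{1,\dots,n\}$ be a set of firms (players) and $E=\{1,\dots,m\}$ a set of markets. Let $\Delta^{m-1}=\{\mathbf{v}\in\mathbb{R}^m:\mathbf{v}\ge 0,\ \mathbf{v}^{T}\mathbf{1}=1\}$. Each firm $i$ chooses a strategy $\mathbf{s}_i=(s_{ix})_{x=1}^m\in S_i=\Delta^{m-1}$. For each market $x$ let $u_x:\mathbb{R}_{\ge 0}\to\mathbb{R}_{\ge 0}$ with $u_x(0)=0$, and let $p_x(t)=u_x(t)/t$ for $t>0$. Let $c:\Delta^{m-1}\to\mathbb{R}_{\ge 0}$ be a common cost function. For a strategy profile $\mathbf{S}=(\mathbf{s}_i)_{i=1}^n$ put $s_x=\sum_{i=1}^n s_{ix}$ and $\mathbf{s}_{-i}=\sum_{j\ne i}\mathbf{s}_j$. The payoff of player $i$ is $u_i(\mathbf{s}_i;\mathbf{s}_{-i})=\sum_{x=1}^m p_x(s_x)s_{ix}-c(\mathbf{s}_i)$ (a term with $s_x=0$ is taken to be $0$). The game is $\mathcal{G}=(N,S,(u_i)_{i=1}^n)$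 with $S=\prod_{i=1}^n\Delta^{m-1}$. *)

(* Defs.v *)
From HB Require Import structures.
From mathcomp Require Import all_boot all_order all_algebra.
From mathcomp Require Import all_classical all_reals all_analysis.
Set Implicit Arguments. Unset Strict Implicit. Unset Printing Implicit Defensive.
Import Order.TTheory GRing.Theory Num.Theory.
Import numFieldNormedType.Exports.
Local Open Scope ring_scope.
Local Open Scope classical_set_scope.

Section Game.
Variable R : realType.

Definition in_simplex (m : nat) (v : 'rV[R]_m) : Prop :=
  (forall x : 'I_m, 0 <= v 0 x) /\ \sum_(x < m) v 0 x = 1.

Definition concave_nonneg (f : R -> R) : Prop :=
  forall a b t : R, 0 <= a -> 0 <= b -> 0 <= t -> t <= 1 ->
    t * f a + (1 - t) * f b <= f (t * a + (1 - t) * b).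
Definition strictly_concave_nonneg (f : R -> R) : Prop :=
  forall a b t : R, 0 <= a -> 0 <= b -> a != b -> 0 < t -> t < 1 ->
    t * f a + (1 - t) * f b < f (t * a + (1 - t) * b).

(* Differentiability of f on its domain [0, +oo): derivable at every t > 0,
   right-differentiable at 0. *)
Definition differentiable_nonneg (f : R -> R) : Prop :=
  (forall t : R, 0 < t -> derivable f t 1) /\
  cvg ((fun h : R => h^-1 * (f h - f 0)) @ 0^'+).

Definition convex_simplex (m : nat) (c : 'rV[R]_m -> R) : Prop :=
  forall (a b : 'rV[R]_m) (t : R), in_simplex a -> in_simplex b ->
    0 <= t -> t <= 1 ->
    c (t *: a + (1 - t) *: b) <= t * c a + (1 - t) * c b.
Definition strictly_convex_simplex (m : nat) (c : 'rV[R]_m -> R) : Prop :=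
  forall (a b : 'rV[R]_m) (t : R), in_simplex a -> in_simplex b ->
    a != b -> 0 < t -> t < 1 ->
    c (t *: a + (1 - t) *: b) < t * c a + (1 - t) * c b.

(* Total load on market x under profile S (rows = firms). *)
Definition load (n m : nat) (S : 'M[R]_(n, m)) (x : 'I_m) : R :=
  \sum_(i < n) S i x.

Definition price (f : R -> R) (t : R) : R := f t / t.

(* Payoff of firm i; a term with s_x = 0 is 0. *)
Definition payoff (n m : nat) (u : 'I_m -> R -> R) (c : 'rV[R]_m -> R)
    (S : 'M[R]_(n, m)) (i : 'I_n) : R :=
  \sum_(x < m) (if load S x == 0 then 0 else price (u x) (load S x) * S i x)
  - c (row i S).

Definition deviate (n m : nat) (S : 'M[R]_(n, m)) (i : 'I_n) (s : 'rV[R]_m)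
    : 'M[R]_(n, m) :=
  \matrix_(j, x) (if j == i then s 0 x else S j x).

Definition is_pure_NE (n m : nat) (u : 'I_m -> R -> R) (c : 'rV[R]_m -> R)
    (S : 'M[R]_(n, m)) : Prop :=
  (forall i : 'I_n, in_simplex (row i S)) /\
  forall (i : 'I_n) (s : 'rV[R]_m), in_simplex s ->
    payoff u c (deviate S i s) i <= payoff u c S i.

End Game.

(* Main.v *)
Require Import Defs.
From HB Require Import structures.
From mathcomp Require Import all_boot all_order all_algebra.
From mathcomp Require Import all_classical all_reals all_analysis.
From mathcomp Require Import ring lra.
Import Order.TTheory GRing.Theory Num.Theory.
Import numFieldNormedType.Exports.
Local Open Scope ring_scope.
Local Open Scope classical_set_scope.

Section M.
Variable R : realType.
Implicit Types (u : R -> R) (t e h v a b : R).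

Lemma Qbound u t h : concave_nonneg u -> u 0 = 0 -> 0 < t -> 0 < h -> h <= t / 2 ->
  (2 * u (t/2) - u t) / t ^+ 2 <= (price u (t - h) - price u t) / h.
Proof.
move=> uc u0 t0 h0 ht.
have hc : u (t - h) >= (2 * h / t) * u (t/2) + (1 - 2 * h / t) * u t.
  have := uc (t/2) t (2 * h / t) _ _ _ _.
  have -> : 2 * h / t * (t / 2) + (1 - 2 * h / t) * t = t - h.
    by field; rewrite gt_eqF.
  apply; [lra|lra| |].
  - by apply: divr_ge0; lra.
  - by rewrite ler_pdivrMr //; lra.
have kc : 0 <= 2 * u (t/2) - u t.
  have := uc t 0 (1/2) _ _ _ _.
  have -> : 1 / 2 * t + (1 - 1 / 2) * 0 = t / 2 by field.
  rewrite u0; move=> /(_ (ltW t0) (lexx 0)); lra.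
rewrite /price.
set s := t - h.
have s0 : 0 < s by rewrite /s; lra.
have key : (2 * u (t/2) - u t) * h <= t * u s - s * u t.
  have : h * (2 * u (t / 2)) - 2 * h * u t <= t * u s - t * u t.
    have := hc; rewrite -(ler_pM2l t0).
    have -> : t * (2 * h / t * u (t / 2) + (1 - 2 * h / t) * u t) =
       h * (2 * u (t / 2)) - 2 * h * u t + t * u t by field; rewrite gt_eqF.
    lra.
  rewrite /s; lra.
have -> : (u s / s - u t / t) / h = (t * u s - s * u t) / (s * t * h).
  by field; rewrite !gt_eqF.
set k := 2 * u (t / 2) - u t in key kc *.
rewrite ler_pdivlMr ?mulr_gt0 // mulrAC ler_pdivrMr ?exprn_gt0 //.
have st : s * t <= t * t by apply: ler_wpM2r; [exact: ltW | rewrite /s; lra].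
have h1 : k * h * (s * t) <= k * h * (t * t) by apply: ler_wpM2l => //; rewrite mulr_ge0 // ltW.
have h2 : k * h * (t * t) <= (t * u s - s * u t) * (t * t) by apply: ler_wpM2r => //; rewrite mulr_ge0 // ltW.
rewrite expr2; apply: le_trans h2; apply: le_trans h1; rewrite le_eqVlt; apply/orP; left; apply/eqP; ring.
Qed.

Lemma price_diff u t : differentiable_nonneg u -> 0 < t -> differentiable (price u) t.
Proof.
move=> [du _] t0.
apply/derivable1_diffP.
have -> : price u = u * (fun s => (id s)^-1) by apply/funext => s.
apply: derivableM; first exact: du.
apply: derivableV; first by rewrite gt_eqF.
exact: derivable_id.
Qed.

Lemma DN u t v : differentiable_nonneg u -> 0 < t ->
  'D_(- v) (price u) t = - 'D_v (price u) t.
Proof.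
move=> du t0; rewrite !deriveE; try exact: price_diff.
by rewrite linearN.
Qed.

Lemma Dbound u t e : concave_nonneg u -> u 0 = 0 -> differentiable_nonneg u -> 0 < t -> 0 < e ->
  e * ((2 * u (t/2) - u t) / t ^+ 2) <= 'D_(- e) (price u) t.
Proof.
move=> uc u0 du t0 e0.
have der : derivable (price u) t (- e) by apply: diff_derivable; exact: price_diff.
have := cvg_dnbhs_at_right der.
move/cvgr_to_ge; apply.
near=> h.
rewrite /= scalerN.
have h0 : 0 < h by near: h; exact: nbhs_right_gt.
have he : h * e <= t / 2.
  near: h; have te : 0 < t / 2 / e by rewrite divr_gt0 // divr_gt0.
  apply: filterS (nbhs_right_lt te) => h /ltW hl.
  by rewrite -ler_pdivlMr.
have := @Qbound u t (h * e) uc u0 t0 (mulr_gt0 h0 e0) he.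
have -> : h *: e = h * e by [].
rewrite (addrC (- _)) => /(ler_wpM2l (ltW e0)).
have -> : e * ((price u (t - h * e) - price u t) / (h * e)) = h^-1 *: (price u (t - h * e) - price u t).
  by rewrite /GRing.scale /=; field; rewrite !gt_eqF.
by [].
Unshelve. all: by end_near.
Qed.

Definition Hm u a b t e :=
  (price u (t + e * (b - a)) * (a + e * (b - a)) - price u t * a +
   (price u (t - e * (b - a)) * (b - e * (b - a)) - price u t * b)) / e.

Lemma lin_cvg a d : (a + e * d) @[e --> (0:R)^'+] --> a.
Proof.
apply: cvg_at_right_filter.
have H : (a + e * d) @[e --> (0:R)] --> a + 0 * d.
  apply: cvgD; [exact: cvg_cst | apply: cvgMr_tmp; exact: cvg_id].
by rewrite mul0r addr0 in H.
Qed.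

Lemma market u a b t : concave_nonneg u -> u 0 = 0 -> differentiable_nonneg u ->
  0 <= a -> 0 <= b -> a + b <= t ->
  exists L, (Hm u a b t e @[e --> (0:R)^'+] --> L) /\ (b - a) ^+ 2 * ((2 * u (t/2) - u t) / t ^+ 2) <= L.
Proof.
move=> uc u0 du a0 b0 abt.
have [ab|ab] := eqVneq (b - a) 0.
  exists 0; split; last by rewrite ab expr0n /= mul0r.
  have -> : Hm u a b t = fun=> 0.
    apply/funext => e; rewrite /Hm ab !mulr0 addr0 subr0.
    have -> : b = a by apply/eqP; rewrite -subr_eq0 ab.
    by rewrite addr0 subr0 !subrr addr0 mul0r.
  exact: (cvg_cst (0:R)).
have t0 : 0 < t.
  have : a != b by apply: contraNneq ab => ->; rewrite subrr.
  rewrite neq_lt => /orP[] ?; lra.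
set d := b - a in ab *.
set p := price u.
set D := 'D_d p t.
have dd : derivable p t d by apply: diff_derivable; exact: price_diff.
have dd' : derivable p t (- d) by apply: diff_derivable; exact: price_diff.
exists (a * D + b * 'D_(- d) p t); split.
  have -> : Hm u a b t = fun e => (a + e * d) * (e^-1 *: ((p \o shift t) (e *: d) - p t))
                + (b - e * d) * (e^-1 *: ((p \o shift t) (e *: - d) - p t)).
    apply/funext => e; rewrite /Hm /= -/p.
    have [->|e0] := eqVneq e 0; first by rewrite invr0 !scale0r !mulr0 addr0.
    rewrite /GRing.scale /= !(addrC _ t) mulrN.
    rewrite -/d; set P1 := p (t + e * d); set P2 := p (t - e * d); set P0 := p t; by field.
  apply: cvgD; apply: cvgM.
  - exact: lin_cvg.
  - exact: cvg_dnbhs_at_right dd.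
  - have H := lin_cvg b (- d).
    by under eq_cvg do rewrite -mulrN.
  - exact: cvg_dnbhs_at_right dd'.
rewrite DN // -/D.
have -> : a * D + b * - D = - (d * D) by rewrite /d; ring.
set k := (2 * u (t / 2) - u t) / t ^+ 2.
rewrite neq_lt in ab; case/orP: ab => dlt.
- have := @Dbound u t (- d) uc u0 du t0 ltac:(by rewrite oppr_gt0).
  rewrite opprK -/D => H.
  have dp : 0 <= - d by rewrite oppr_ge0 ltW.
  have := ler_wpM2l dp H.
  move=> H2; have -> : d ^+ 2 * k = - d * (- d * k) by ring.
  by have -> : - (d * D) = - d * D by ring.
- have := @Dbound u t d uc u0 du t0 dlt.
  rewrite DN // -/D => H.
  have := ler_wpM2l (ltW dlt) H.
  move=> H2; have -> : d ^+ 2 * k = d * (d * k) by ring.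
  by have -> : - (d * D) = d * - D by ring.
Qed.

Lemma payoffE n m (u : 'I_m -> R -> R) (c : 'rV[R]_m -> R) (S : 'M[R]_(n, m)) i :
  (forall x, u x 0 = 0) ->
  payoff u c S i = \sum_(x < m) price (u x) (load S x) * S i x - c (row i S).
Proof.
move=> u0; rewrite /payoff; congr (_ - _); apply: eq_bigr => x _.
by case: eqP => // ->; rewrite /price u0 !mul0r.
Qed.

Lemma row_dev n m (S : 'M[R]_(n, m)) i s : row i (deviate S i s) = s.
Proof. by apply/rowP => k; rewrite !mxE eqxx. Qed.

Lemma ent_dev n m (S : 'M[R]_(n, m)) i s x : deviate S i s i x = s 0 x.
Proof. by rewrite !mxE eqxx. Qed.

Lemma load_dev n m (S : 'M[R]_(n, m)) i s x :
  load (deviate S i s) x = load S x - S i x + s 0 x.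
Proof.
rewrite /load (bigD1 i) //= [X in _ = X - _ + _](bigD1 i) //= !mxE eqxx.
rewrite (eq_bigr (fun k => S k x)); last by move=> k /negbTE kn; rewrite !mxE kn.
ring.
Qed.

Lemma simplex_comb m (a b : 'rV[R]_m) t : in_simplex a -> in_simplex b -> 0 <= t -> t <= 1 ->
  in_simplex (t *: a + (1 - t) *: b).
Proof.
move=> [a0 a1] [b0 b1] t0 t1; split.
  move=> x; rewrite !mxE; apply: addr_ge0; apply: mulr_ge0 => //; lra.
under eq_bigr do rewrite !mxE.
by rewrite big_split /= -!mulr_sumr a1 b1 !mulr1 subrKC.
Qed.

Lemma ab_load n m (S : 'M[R]_(n, m)) i j x : i != j -> (forall k, 0 <= S k x) ->
  S i x + S j x <= load S x.
Proof.
move=> ij S0; rewrite /load (bigD1 i) //= (bigD1 j) 1?eq_sym //= addrA lerDl.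
by apply: sumr_ge0 => k _; exact: S0.
Qed.

Lemma sum_cvg m (f : 'I_m -> R -> R) (L : 'I_m -> R) :
  (forall x, f x e @[e --> (0:R)^'+] --> L x) ->
  (\sum_(x < m) f x e) @[e --> (0:R)^'+] --> \sum_(x < m) L x.
Proof.
move=> H; apply: cvg_big => //; exact: add_continuous.
Qed.
End M.

Theorem proposition3 (R : realType) (n m : nat)
  (u : 'I_m -> R -> R) (c : 'rV[R]_m -> R)
  (u_nonneg : forall (x : 'I_m) (t : R), 0 <= t -> 0 <= u x t)
  (u_0 : forall x : 'I_m, u x 0 = 0)
  (u_concave : forall x : 'I_m, concave_nonneg (u x))
  (u_diff : forall x : 'I_m, differentiable_nonneg (u x))
  (c_nonneg : forall v : 'rV[R]_m, in_simplex v -> 0 <= c v)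
  (c_convex : convex_simplex c)
  (c_diff : forall v : 'rV[R]_m, in_simplex v -> differentiable c v)
  (strict : (exists x0 : 'I_m, forall x : 'I_m, x != x0 ->
               strictly_concave_nonneg (u x))
            \/ strictly_convex_simplex c)
  (S : 'M[R]_(n, m)) :
  is_pure_NE u c S -> forall i j : 'I_n, row i S = row j S.
Proof.
move=> [simS NE] i j.
case: (eqVneq (row i S) (row j S)) => // neq; exfalso.
have ij : i != j by apply: contraNneq neq => ->.
have S0 : forall k x, 0 <= S k x by move=> k x; have [h _] := simS k; have := h x; rewrite mxE.
set si := row i S; set sj := row j S.
have simi : in_simplex si := simS i.
have simj : in_simplex sj := simS j.
set a := fun x => S i x; set b := fun x => S j x; set t := fun x => load S x.
have abt x : a x + b x <= t x by exact: ab_load.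
pose kap x := (2 * u x (t x / 2) - u x (t x)) / t x ^+ 2.
pose H x e := @Hm R (u x) (a x) (b x) (t x) e.
pose L x := lim (H x e @[e --> (0:R)^'+]).
have HL x : (H x e @[e --> (0:R)^'+] --> L x) /\ (b x - a x) ^+ 2 * kap x <= L x.
  have [L' [HL' bd]] := @market R (u x) (a x) (b x) (t x) (u_concave x) (u_0 x) (u_diff x) (S0 i x) (S0 j x) (abt x).
  have E : L x = L' by apply: cvg_lim.
  by rewrite E; split.
pose mid := (1/2 : R) *: si + (1 - 1/2) *: sj.
have simm : in_simplex mid by apply: simplex_comb => //; lra.
pose K := 2 * c mid - c si - c sj.
have Kle : K <= 0.
  have := c_convex si sj (1/2) simi simj ltac:(lra) ltac:(lra); rewrite /K -/mid; lra.
have bound : \forall e \near (0:R)^'+, \sum_(x < m) H x e <= 2 * K.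
  near=> e.
  have e0 : 0 < e by near: e; exact: nbhs_right_gt.
  have e1 : e <= 1/2.
    near: e; have h2 : (0:R) < 1/2 by lra.
    by apply: filterS (nbhs_right_lt h2) => ? /ltW.
  pose s1 := e *: sj + (1 - e) *: si.
  pose s2 := e *: si + (1 - e) *: sj.
  have sim1 : in_simplex s1 by apply: simplex_comb => //; lra.
  have sim2 : in_simplex s2 by apply: simplex_comb => //; lra.
  have N1 := NE i s1 sim1.
  have N2 := NE j s2 sim2.
  rewrite !payoffE // row_dev in N1 N2.
  have R1 : \sum_(x < m) price (u x) (load (deviate S i s1) x) * deviate S i s1 i x =
     \sum_(x < m) price (u x) (t x + e * (b x - a x)) * (a x + e * (b x - a x)).
    apply: eq_bigr => x _; rewrite load_dev ent_dev !mxE /t /a /b /=.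
    congr (price _ _ * _); ring.
  have R2 : \sum_(x < m) price (u x) (load (deviate S j s2) x) * deviate S j s2 j x =
     \sum_(x < m) price (u x) (t x - e * (b x - a x)) * (b x - e * (b x - a x)).
    apply: eq_bigr => x _; rewrite load_dev ent_dev !mxE /t /a /b /=.
    congr (price _ _ * _); ring.
  rewrite R1 in N1; rewrite R2 in N2.
  have C1 : c s1 <= 2 * e * c mid + (1 - 2 * e) * c si.
    have := c_convex mid si (2 * e) simm simi ltac:(lra) ltac:(lra).
    have -> : (2 * e) *: mid + (1 - 2 * e) *: si = s1.
      by apply/rowP => k; rewrite /s1 /mid !mxE; field.
    by [].
  have C2 : c s2 <= 2 * e * c mid + (1 - 2 * e) * c sj.
    have := c_convex mid sj (2 * e) simm simj ltac:(lra) ltac:(lra).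
    have -> : (2 * e) *: mid + (1 - 2 * e) *: sj = s2.
      by apply/rowP => k; rewrite /s2 /mid !mxE; field.
    by [].
  rewrite /H /Hm -mulr_suml ler_pdivrMr // big_split /= !sumrB.
  rewrite /K; move: N1 N2 C1 C2; rewrite -/si -/sj.
  set X1 := \sum_(x < m) _; set X2 := \sum_(x < m) _.
  set X3 := \sum_(x < m) _; set X4 := \sum_(x < m) _.
  rewrite row_dev => h1 h2 h3 h4; nra.
have := cvgr_to_le (@sum_cvg R m H L (fun x => (HL x).1)) bound.
move=> /(_ (at_right_proper_filter 0)) HLK.
have kap0 x : 0 <= kap x.
  apply: divr_ge0; last exact: sqr_ge0.
  have t0 : 0 <= t x by have := abt x; rewrite /a /b /=; have := S0 i x; have := S0 j x; lra.
  have := u_concave x (t x) 0 (1/2) t0 (lexx 0) ltac:(lra) ltac:(lra).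
  have -> : 1 / 2 * t x + (1 - 1 / 2) * 0 = t x / 2 by field.
  rewrite u_0; lra.
have Lge x : 0 <= L x.
  apply: le_trans (HL x).2; apply: mulr_ge0 => //; exact: sqr_ge0.
have sL0 : 0 <= \sum_(x < m) L x by apply: sumr_ge0 => x _; exact: Lge.
case: strict => [[x0 sc]|sc].
- have [x [xn abx]] : exists x, x != x0 /\ a x != b x.
    apply/not_existsP => hne; move/negP: neq; apply; apply/eqP/rowP => k.
    have eqk y : y != x0 -> a y = b y.
      move=> yn; case: (eqVneq (a y) (b y)) => // abn; exfalso; exact: (hne y (conj yn abn)).
    rewrite !mxE.
    have [->|kn] := eqVneq k x0; last exact: eqk.
    have [_ si1] := simi; have [_ sj1] := simj.
    move: si1 sj1; rewrite (bigD1 x0) //= [X in _ -> X = _ -> _](bigD1 x0) //= !mxE.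
    have E1 : \sum_(y < m | y != x0) si 0 y = \sum_(y < m | y != x0) sj 0 y.
      by apply: eq_bigr => y yn; rewrite !mxE; exact: eqk.
    rewrite E1 => h1 h2; rewrite /a /b /=; lra.
  have t0 : 0 < t x.
    have := abt x; rewrite /a /b /=; have := S0 i x; have := S0 j x.
    move: abx; rewrite neq_lt /a /b => /orP[] ?; lra.
  have kp : 0 < kap x.
    apply: divr_gt0; last exact: exprn_gt0.
    have := sc x xn (t x) 0 (1/2) (ltW t0) (lexx 0) ltac:(by rewrite gt_eqF) ltac:(lra) ltac:(lra).
    have -> : 1 / 2 * t x + (1 - 1 / 2) * 0 = t x / 2 by field.
    rewrite u_0; lra.
  have Lx : 0 < L x.
    apply: lt_le_trans (HL x).2; apply: mulr_gt0 => //.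
    by rewrite exprn_even_gt0 //= subr_eq0 eq_sym.
  have : 0 < \sum_(y < m) L y.
    rewrite (bigD1 x) //=; apply: ltr_pwDl => //.
    by apply: sumr_ge0 => y _; exact: Lge.
  lra.
- have : K < 0.
    have := sc si sj (1/2) simi simj neq ltac:(lra) ltac:(lra).
    rewrite -/mid /K; lra.
  lra.
Unshelve. all: by end_near.
Qed.
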